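(* Let $f:[0,1]\to[0,\infty)$ be continuous and non-decreasing with $f(u)>0$ for $u\in(0,1]$, let $0<\delta<1$, let $r$ be a positive integer, and fix $x>0$ and $y\in\mathbb{R}$. Then the functions $\mathbf{h}\mapsto\psi_{com}(\mathbf{h})$, $\mathbf{h}\mapsto\psi_{int}(\mathbf{h},y)$ and $\mathbf{h}\mapsto\psi_{ext}(\mathbf{h},x)$ defined in the context are concave on $[0,1-\delta]^r$.
   Context: Notation: $H(t)=-t\log t-(1-t)\log(1-t)$ (natural log); $\operatorname{erf}(x)=\frac2{\sqrt\pi}\int_0^xe^{-t^2}dt$; $\Phi$ the standard normal distribution function; $\lambda(u)=\frac{u^2}2+\log(2\Phi(u))$; $f_i=f\big(\delta+\frac{(i-1)(1-\delta)}{r}\big)$. For $\mathbf{h}\in[0,1-\delta]^r$: $\psi_{com}(\mathbf{h})=\frac{1-\delta}{r}\sum_{i=1}^rH\big(\frac{h_i}{1-\delta}\big)+\big(r\sum_ih_i-\delta\big)\log2$; $c_1=\int_0^\delta f^2(u)du$, $\bar c_0=\frac1r\sum_if_ih_i$, $\bar\lambda_0(s)=\frac{1}{r\bar c_0}\sum_ih_i\lambda(sf_i)$, $\bar\lambda_0^*(y)=\sup_{s\in\mathbb{R}}(sy-\bar\lambda_0(s))$, with $\bar c_0\bar\lambda_0^*(y)$ understood as $\sup_s(\bar c_0sy-\frac1r\sum_ih_i\lambda(sf_i))$; $\psi_{int}(\mathbf{h},y)=-\big(r\sum_ih_i-\delta\big)\log2-\Big(\frac{\bar c_0^2}{2c_1}y^2+\bar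 c_0\bar\lambda_0^*(y)\Big)$; $\bar c_2=\int_0^\delta f^2(u)du+\frac1r\sum_if_i^2h_i$, $\bar G_0(x)=\int_\delta^1\log\operatorname{erf}(xf(u))du-\frac1r\sum_ih_i\log\operatorname{erf}(xf_i)$, $\psi_{ext}(\mathbf{h},x)=-(\bar c_2x^2-\bar G_0(x))$. *)

(* Defs.v *)
From Stdlib Require Import Reals Lra.
From Coquelicot Require Import Coquelicot.
Open Scope R_scope.

Fixpoint sumr (n : nat) (g : nat -> R) : R :=
  match n with O => 0 | S m => sumr m g + g m end.

Definition Hent (t : R) : R := - t * ln t - (1 - t) * ln (1 - t).

Definition erf (x : R) : R := 2 / sqrt PI * RInt (fun t => exp (- t ^ 2)) 0 x.

Definition Phi (u : R) : R :=
  RInt_gen (fun t => exp (- t ^ 2 / 2) / sqrt (2 * PI)) (Rbar_locally m_infty) (at_point u).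

Definition lam (u : R) : R := u ^ 2 / 2 + ln (2 * Phi u).

(* f_i for i = 1..r is stored at index i-1 : fi f delta r j = f(delta + j(1-delta)/r), j = 0..r-1 *)
Definition fi (f : R -> R) (delta : R) (r : nat) (j : nat) : R :=
  f (delta + INR j * (1 - delta) / INR r).

Definition psi_com (delta : R) (r : nat) (h : nat -> R) : R :=
  (1 - delta) / INR r * sumr r (fun j => Hent (h j / (1 - delta)))
  + (INR r * sumr r h - delta) * ln 2.

Definition c1 (f : R -> R) (delta : R) : R := RInt (fun u => (f u) ^ 2) 0 delta.

Definition c0bar (f : R -> R) (delta : R) (r : nat) (h : nat -> R) : R :=
  / INR r * sumr r (fun j => fi f delta r j * h j).

(* c0bar * lambda0bar^*(y) := sup_s ( c0bar s y - (1/r) sum_i h_i lambda(s f_i) ), in Rbar *)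
Definition c0_lam0star (f : R -> R) (delta : R) (r : nat) (h : nat -> R) (y : R) : Rbar :=
  Lub_Rbar (fun z => exists s : R,
     z = c0bar f delta r h * s * y - / INR r * sumr r (fun j => h j * lam (s * fi f delta r j))).

Definition psi_int (f : R -> R) (delta : R) (r : nat) (h : nat -> R) (y : R) : Rbar :=
  Rbar_minus
    (Finite (- (INR r * sumr r h - delta) * ln 2
             - (c0bar f delta r h) ^ 2 / (2 * c1 f delta) * y ^ 2))
    (c0_lam0star f delta r h y).

Definition c2bar (f : R -> R) (delta : R) (r : nat) (h : nat -> R) : R :=
  RInt (fun u => (f u) ^ 2) 0 delta + / INR r * sumr r (fun j => (fi f delta r j) ^ 2 * h j).

Definition G0bar (f : R -> R) (delta : R) (r : nat) (h : nat -> R) (x : R) : R :=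
  RInt (fun u => ln (erf (x * f u))) delta 1
  - / INR r * sumr r (fun j => h j * ln (erf (x * fi f delta r j))).

Definition psi_ext (f : R -> R) (delta : R) (r : nat) (h : nat -> R) (x : R) : R :=
  - (c2bar f delta r h * x ^ 2 - G0bar f delta r h x).

(* h in [0,1-delta]^r  (only coordinates 0..r-1 matter) *)
Definition in_box (r : nat) (delta : R) (h : nat -> R) : Prop :=
  forall j, (j < r)%nat -> 0 <= h j <= 1 - delta.

Definition comb (t : R) (a b : nat -> R) : nat -> R := fun j => t * a j + (1 - t) * b j.

Definition concave_on_box (r : nat) (delta : R) (F : (nat -> R) -> R) : Prop :=
  forall a b t, in_box r delta a -> in_box r delta b -> 0 <= t <= 1 ->
    t * F a + (1 - t) * F b <= F (comb t a b).

(* concavity of an extended-real-valued function on the box: convex hypograph *)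
Definition concave_on_box_Rbar (r : nat) (delta : R) (F : (nat -> R) -> Rbar) : Prop :=
  forall a b t (al be : R), in_box r delta a -> in_box r delta b -> 0 <= t <= 1 ->
    Rbar_le al (F a) -> Rbar_le be (F b) ->
    Rbar_le (t * al + (1 - t) * be) (F (comb t a b)).

Definition continuous_on_01 (f : R -> R) : Prop :=
  forall u, 0 <= u <= 1 -> forall eps, 0 < eps -> exists d, 0 < d /\
    forall v, 0 <= v <= 1 -> Rabs (v - u) < d -> Rabs (f v - f u) < eps.

(* Main.v *)
Require Import Defs.
From Stdlib Require Import Reals Lra Psatz.
From Coquelicot Require Import Coquelicot.
Open Scope R_scope.

Lemma sumr_ext n u v : (forall j, (j < n)%nat -> u j = v j) -> sumr n u = sumr n v.
Proof. induction n; simpl; intros H; auto. rewrite IHn; [rewrite H|]; auto. Qed.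

Lemma sumr_le n u v : (forall j, (j < n)%nat -> u j <= v j) -> sumr n u <= sumr n v.
Proof. induction n; simpl; intros H; [lra|]. pose proof (H n ltac:(lia)).
  assert (sumr n u <= sumr n v) by (apply IHn; intros; apply H; lia). lra. Qed.

Lemma sumr_lin n p q u v : sumr n (fun j => p * u j + q * v j) = p * sumr n u + q * sumr n v.
Proof. induction n; simpl; [ring|]. rewrite IHn; ring. Qed.

Lemma sumr_combL n t g a b : sumr n (fun j => g j * comb t a b j)
  = t * sumr n (fun j => g j * a j) + (1 - t) * sumr n (fun j => g j * b j).
Proof. rewrite <- sumr_lin. apply sumr_ext; intros; unfold comb; ring. Qed.

Lemma sumr_combR n t g a b : sumr n (fun j => comb t a b j * g j)
  = t * sumr n (fun j => a j * g j) + (1 - t) * sumr n (fun j => b j * g j).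
Proof. rewrite <- sumr_lin. apply sumr_ext; intros; unfold comb; ring. Qed.

Lemma sumr_comb n t a b : sumr n (comb t a b) = t * sumr n a + (1 - t) * sumr n b.
Proof. rewrite <- sumr_lin. apply sumr_ext; intros; unfold comb; ring. Qed.

Lemma xlnx_ineq a m : 0 <= a -> 0 < m -> a * ln a >= a * ln m + a - m.
Proof. intros Ha Hm. destruct (Req_dec a 0) as [->|Hn]; [lra|].
  assert (Ha' : 0 < a) by lra.
  pose proof (exp_ineq1_le (ln (m / a))) as H. rewrite exp_ln in H
    by (apply Rdiv_lt_0_compat; lra).
  rewrite ln_div in H by lra.
  assert (a * (1 + (ln m - ln a)) <= a * (m / a)) by (apply Rmult_le_compat_l; lra).
  assert (a * (m / a) = m) by (field; lra). nra. Qed.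

Lemma xlnx_conv a b t : 0 <= a -> 0 <= b -> 0 <= t <= 1 ->
  (t*a+(1-t)*b)*ln(t*a+(1-t)*b) <= t*(a*ln a) + (1-t)*(b*ln b).
Proof. intros Ha Hb Ht. set (m := t*a+(1-t)*b).
  assert (0 <= t*a) by nra. assert (0 <= (1-t)*b) by nra.
  destruct (Req_dec m 0) as [Hm|Hm].
  - assert (t*a = 0) by (unfold m in Hm; lra). assert ((1-t)*b = 0) by (unfold m in Hm; lra).
    rewrite Hm. replace (t*(a*ln a)) with ((t*a)*ln a) by ring.
    replace ((1-t)*(b*ln b)) with (((1-t)*b)*ln b) by ring.
    rewrite H1, H2. lra.
  - assert (0 < m) by (unfold m in *; lra).
    pose proof (xlnx_ineq a m Ha H1). pose proof (xlnx_ineq b m Hb H1).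
    assert (t*(a*ln a) >= t*(a*ln m + a - m)) by (apply Rmult_ge_compat_l; lra).
    assert ((1-t)*(b*ln b) >= (1-t)*(b*ln m + b - m)) by (apply Rmult_ge_compat_l; lra).
    assert (E : m * ln m = t*(a*ln m + a - m) + (1-t)*(b*ln m + b - m)).
    { remember (ln m) as L. unfold m. ring. }
    lra. Qed.

Lemma Hent_conc p q t : 0<=p<=1 -> 0<=q<=1 -> 0<=t<=1 ->
  t*Hent p + (1-t)*Hent q <= Hent (t*p+(1-t)*q).
Proof. intros Hp Hq Ht. unfold Hent.
  pose proof (xlnx_conv p q t ltac:(lra) ltac:(lra) Ht).
  pose proof (xlnx_conv (1-p) (1-q) t ltac:(lra) ltac:(lra) Ht).
  replace (1 - (t*p+(1-t)*q)) with (t*(1-p)+(1-t)*(1-q)) by ring. nra. Qed.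

Lemma part1 delta r : 0 < delta < 1 -> (0 < r)%nat ->
  concave_on_box r delta (fun h => psi_com delta r h).
Proof. intros Hd Hr a b t Ha Hb Ht. unfold psi_com. rewrite sumr_comb.
  assert (HK : 0 <= (1 - delta) / INR r).
  { apply Rdiv_le_0_compat; [lra| apply lt_0_INR; lia]. }
  assert (Hbx : forall h j, in_box r delta h -> (j < r)%nat -> 0 <= h j / (1-delta) <= 1).
  { intros h j Hh Hj. destruct (Hh j Hj). split.
    - apply Rdiv_le_0_compat; lra.
    - unfold Rdiv. apply (Rmult_le_reg_r (1-delta)); [lra|].
      rewrite Rmult_assoc, Rinv_l by lra. lra. }
  assert (HS : t * sumr r (fun j => Hent (a j / (1 - delta))) + (1-t) * sumr r (fun j => Hent (b j / (1 - delta)))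
     <= sumr r (fun j => Hent (comb t a b j / (1 - delta)))).
  { rewrite <- sumr_lin. apply sumr_le. intros j Hj.
    replace (comb t a b j / (1-delta)) with (t*(a j/(1-delta)) + (1-t)*(b j/(1-delta)))
      by (unfold comb, Rdiv; ring).
    apply Hent_conc; auto. }
  set (K := (1 - delta) / INR r) in *.
  set (Sa := sumr r (fun j => Hent (a j / (1 - delta)))) in *.
  set (Sb := sumr r (fun j => Hent (b j / (1 - delta)))) in *.
  set (Sc := sumr r (fun j => Hent (comb t a b j / (1 - delta)))) in *.
  assert (K * (t*Sa + (1-t)*Sb) <= K * Sc) by (apply Rmult_le_compat_l; auto).
  nra. Qed.

Lemma part3 f delta r x : concave_on_box r delta (fun h => psi_ext f delta r h x).
Proof. intros a b t Ha Hb Ht. unfold psi_ext, c2bar, G0bar.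
  rewrite (sumr_combL r t (fun j => fi f delta r j ^ 2)).
  rewrite (sumr_combR r t (fun j => ln (erf (x * fi f delta r j)))).
  apply Req_le. ring. Qed.

Definition clamp u := Rmax 0 (Rmin u 1).

Lemma clamp_in u : 0 <= clamp u <= 1.
Proof. unfold clamp, Rmax, Rmin. repeat destruct Rle_dec; lra. Qed.
Lemma clamp_lip u v : Rabs (clamp v - clamp u) <= Rabs (v - u).
Proof. unfold clamp, Rmax, Rmin. repeat destruct Rle_dec; unfold Rabs; repeat destruct Rcase_abs; lra. Qed.

Lemma c1_ge0 f delta : continuous_on_01 f -> 0 < delta < 1 -> 0 <= Defs.c1 f delta.
Proof. intros Hc Hd. unfold Defs.c1. apply RInt_ge_0; [lra| |intros; apply pow2_ge_0].
  set (fc := fun u => f (clamp u)).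
  assert (C : forall u, continuity_pt fc u).
  { intros u. unfold continuity_pt, continue_in, limit1_in, limit_in. simpl. unfold R_dist.
    intros eps Heps. destruct (Hc (clamp u) (clamp_in u) eps Heps) as [d [Hd0 Hdd]].
    exists d. split; [lra|]. intros v [_ Hv]. unfold fc. apply Hdd. apply clamp_in.
    eapply Rle_lt_trans; [apply clamp_lip| exact Hv]. }
  apply (ex_RInt_ext (fun u => fc u * fc u)).
  - intros u Hu. unfold fc, clamp. rewrite Rmin_left in Hu by lra. rewrite Rmax_right in Hu by lra.
    rewrite Rmin_left by lra. rewrite (Rmax_right 0 u) by lra. change (f u * f u = f u ^ 2). ring.
  - apply (@ex_RInt_continuous R_CompleteNormedModule). intros z _. apply continuity_pt_filterlim.
    apply continuity_pt_mult; apply C. Qed.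

Definition V f delta r h y s :=
  c0bar f delta r h * s * y - / INR r * sumr r (fun j => h j * lam (s * fi f delta r j)).

Lemma c0bar_comb f delta r t a b :
  c0bar f delta r (comb t a b) = t * c0bar f delta r a + (1-t) * c0bar f delta r b.
Proof. unfold c0bar. rewrite sumr_combL. ring. Qed.

Lemma V_comb f delta r t a b y s :
  V f delta r (comb t a b) y s = t * V f delta r a y s + (1-t) * V f delta r b y s.
Proof. unfold V. rewrite c0bar_comb.
  rewrite (sumr_combR r t (fun j => lam (s * fi f delta r j))). ring. Qed.

Lemma L_finite f delta r h y : c0_lam0star f delta r h y <> m_infty.
Proof. unfold c0_lam0star. destruct (Lub_Rbar_correct (fun z => exists s : R,
     z = c0bar f delta r h * s * y - / INR r * sumr r (fun j => h j * lam (s * fi f delta r j))))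
  as [Hub _].
  intros E. rewrite E in Hub. refine (Hub _ (ex_intro _ 0 eq_refl)). Qed.

Lemma L_ub f delta r h y s :
  Rbar_le (V f delta r h y s) (c0_lam0star f delta r h y).
Proof. unfold c0_lam0star. destruct (Lub_Rbar_correct (fun z => exists s : R,
     z = c0bar f delta r h * s * y - / INR r * sumr r (fun j => h j * lam (s * fi f delta r j))))
  as [Hub _]. apply Hub. exists s. reflexivity. Qed.

Lemma L_conv f delta r a b t y la lb : 0 <= t <= 1 ->
  c0_lam0star f delta r a y = Finite la -> c0_lam0star f delta r b y = Finite lb ->
  Rbar_le (c0_lam0star f delta r (comb t a b) y) (t * la + (1-t) * lb).
Proof. intros Ht Ea Eb. unfold c0_lam0star at 1.
  destruct (Lub_Rbar_correct (fun z => exists s : R,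
     z = c0bar f delta r (comb t a b) * s * y - / INR r * sumr r (fun j => comb t a b j * lam (s * fi f delta r j))))
  as [_ Hl]. apply Hl. intros z [s ->].
  fold (V f delta r (comb t a b) y s). rewrite V_comb.
  pose proof (L_ub f delta r a y s) as Ha. rewrite Ea in Ha.
  pose proof (L_ub f delta r b y s) as Hb. rewrite Eb in Hb. simpl in *.
  assert (t * V f delta r a y s <= t * la) by (apply Rmult_le_compat_l; lra).
  assert ((1-t) * V f delta r b y s <= (1-t) * lb) by (apply Rmult_le_compat_l; lra).
  lra. Qed.

Lemma part2 f delta r y : continuous_on_01 f -> 0 < delta < 1 ->
  concave_on_box_Rbar r delta (fun h => psi_int f delta r h y).
Proof. intros Hc Hd a b t al be Ha Hb Ht Hal Hbe. unfold psi_int in *.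
  destruct (c0_lam0star f delta r a y) as [la| |] eqn:Ea;
    [| simpl in Hal; contradiction | exfalso; eapply L_finite; eauto].
  destruct (c0_lam0star f delta r b y) as [lb| |] eqn:Eb;
    [| simpl in Hbe; contradiction | exfalso; eapply L_finite; eauto].
  pose proof (L_conv f delta r a b t y la lb Ht Ea Eb) as Hc2.
  destruct (c0_lam0star f delta r (comb t a b) y) as [lc| |] eqn:Ec;
    [| simpl in Hc2; contradiction | exfalso; eapply L_finite; eauto].
  cbn [Rbar_le Rbar_minus Rbar_plus Rbar_opp Rbar_plus'] in *. rewrite sumr_comb, c0bar_comb.
  pose proof (c1_ge0 f delta Hc Hd) as H1.
  assert (HK : 0 <= / (2 * Defs.c1 f delta) * y ^ 2).
  { apply Rmult_le_pos; [|apply pow2_ge_0].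
    destruct (Req_dec (Defs.c1 f delta) 0) as [E|E].
    - rewrite E, Rmult_0_r, Rinv_0. lra.
    - apply Rlt_le, Rinv_0_lt_compat. lra. }
  set (K := / (2 * Defs.c1 f delta) * y ^ 2) in *.
  set (u := c0bar f delta r a) in *. set (v := c0bar f delta r b) in *.
  assert (Hq : (t*u + (1-t)*v)^2 / (2 * Defs.c1 f delta) * y^2 <= t*(u^2 / (2 * Defs.c1 f delta) * y^2) + (1-t)*(v^2 / (2 * Defs.c1 f delta) * y^2)).
  { assert (0 <= t*(1-t)*(u-v)^2*K).
    { apply Rmult_le_pos; [|lra]. apply Rmult_le_pos; [nra|apply pow2_ge_0]. }
    unfold K in *. unfold Rdiv. nra. }
  assert (t * al <= t * (- (INR r * sumr r a - delta) * ln 2 - u ^ 2 / (2 * Defs.c1 f delta) * y ^ 2 + - la))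
    by (apply Rmult_le_compat_l; lra).
  assert ((1-t) * be <= (1-t) * (- (INR r * sumr r b - delta) * ln 2 - v ^ 2 / (2 * Defs.c1 f delta) * y ^ 2 + - lb))
    by (apply Rmult_le_compat_l; lra).
  nra. Qed.

Theorem lemma4 (f : R -> R) (delta : R) (r : nat) (x y : R) :
  continuous_on_01 f ->
  (forall u, 0 <= u <= 1 -> 0 <= f u) ->
  (forall u v, 0 <= u -> u <= v -> v <= 1 -> f u <= f v) ->
  (forall u, 0 < u <= 1 -> 0 < f u) ->
  0 < delta < 1 ->
  (0 < r)%nat ->
  0 < x ->
  concave_on_box r delta (fun h => psi_com delta r h) /\
  concave_on_box_Rbar r delta (fun h => psi_int f delta r h y) /\
  concave_on_box r delta (fun h => psi_ext f delta r h x).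
Proof.
  intros Hc _ _ _ Hd Hr _. split; [apply part1; auto|]. split.
  - apply part2; auto.
  - apply part3.
Qed.
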